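(* Let $\epsilon_1>0$, $n\ge1$, let $u$ be a utility function on contexts of sensitivity $\Delta u\le1$ (context population size or overlap with a fixed starting context, $-\infty$ on non-matching contexts), and let $C_V$ be a starting context with $f_M(D_{C_V},V)=\mathrm{true}$. Consider the Breadth-First Search Sampling algorithm: initialize $C_M=\{C_V\}$ and $\mathrm{Visited}=\emptyset$; while $|\mathrm{Visited}|\le n$ and $C_M\ne\emptyset$: let $C=\mathrm{Exp}^{\epsilon_1}_u(D,C_M)$, add $C$ to $\mathrm{Visited}$ and remove it from $C_M$, and add to $C_M$ every context connected to $C$ that is matching for $V$ and not in $\mathrm{Visited}$. Finally output $\mathrm{Exp}^{\epsilon_1}_u(D,\mathrm{Visited})$. Then this algorithm satisfies $((2n+2)\epsilon_1,\ COE_M(\cdot,V))$-Output Constrained Differential Privacy.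
   Context: Dataset $D$ over categorical attributes $A_1,\dots,A_m$ (domain sizes $|A_i|$, all possible values) and metric attribute $M$; $t=\sum_i|A_i|$. A context is a binary vector of length $t$, $c_{ij}=1$ meaning the $j$-th value of $A_i$ is selected; $D_C$ is the set of tuples of $D$ whose value in every $A_i$ is selected by $C$. Two contexts are connected if their Hamming distance is $1$. $f_M(D_C,V)$ is a deterministic test of whether record $V$ is an outlier in $D_C$ w.r.t. $M$; a context is matching if this is true. $COE_M(D,V)$ is the set of contexts $C$ with $V\in D_C$ and $f_M(D_C,V)=\mathrm{true}$. Sensitivity $\Delta u=\max|u(D_1,r)-u(D_2,r)|$ over neighboring datasets (differing by adding/removing one record) and outputs $r$. $\mathrm{Exp}^{\epsilon}_u(D,\mathcal R)$ outputs $r\in\mathcal R$ with probability $\exp(\epsilon u(D,r)/(2\Delta u))/\sum_{r'\in\mathcal R}\exp(\epsilon u(D,r')/(2\Delta u))$. $D_1,D_2$ are $f$-neighbors if they differ by adding/removing one record and $f(D_1)=f(D_2)\ne\emptyset$; $\mathcal M$ satisfies $(\epsilon,f)$-Output Constrained Differential Privacy if $\Pr[\mathcal M(D_1)\in S]\le e^\epsilon\Pr[\mathcal M(D_2)\in S]$ for all $f$-neighbors and all output sets $S$. *)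

(* Defs.v *)
From HB Require Import structures.
From mathcomp Require Import all_boot all_order all_algebra.
From mathcomp Require Import reals.
From mathcomp Require Import sequences exp.
Set Implicit Arguments. Unset Strict Implicit. Unset Printing Implicit Defensive.
Import Order.TTheory GRing.Theory Num.Theory.
Local Open Scope ring_scope.

Section COE.
Variable R : realType.
(* m categorical attributes; attribute i has domain 'I_(dom i) (all values). *)
Variable m : nat.
Variable dom : 'I_m -> nat.

(* The t = sum_i |A_i| bit positions of a context: pairs (attribute i, value j). *)
Definition position := {i : 'I_m & 'I_(dom i)}.
(* A context: a binary vector of length t, i.e. the set of positions with c_ij = 1. *)
Definition context := {set position}.
(* A record: a value for each categorical attribute plus a metric value. *)
Definition record := ({dffun forall i : 'I_m, 'I_(dom i)} * R)%type.
Definition dataset := seq record.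

Definition neighbors (D1 D2 : dataset) : Prop :=
  exists r : record, perm_eq D2 (r :: D1) \/ perm_eq D1 (r :: D2).

Definition selects (C : context) (r : record) : bool :=
  [forall i : 'I_m, (Tagged (fun i => 'I_(dom i)) (r.1 i)) \in C].

Definition restrict (D : dataset) (C : context) : dataset :=
  [seq r <- D | selects C r].

Definition connected (C1 C2 : context) : bool :=
  #|(C1 :\: C2) :|: (C2 :\: C1)| == 1%N.

(* f : deterministic outlier test f_M(D_C, V). *)
Variable f : dataset -> record -> bool.

Definition COE (D : dataset) (V : record) : {set context} :=
  [set C : context | (V \in restrict D C) && f (restrict D C) V].

(* Utility u(D,C) = g D C on matching contexts, -oo elsewhere; the exponential
   mechanism weight exp(eps u / (2 Delta)) is 0 for u = -oo. *)
Variable g : dataset -> context -> R.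
Variables (Delta eps : R) (V : record).

Definition weight (D : dataset) (C : context) : R :=
  if C \in COE D V then expR (eps * g D C / (2 * Delta)) else 0.

Definition exp_mech (D : dataset) (S : {set context}) (C : context) : R :=
  if C \in S then weight D C / (\sum_(C' in S) weight D C') else 0.

Definition state := ({set context} * {set context})%type.

Variable n : nat.

Definition next_state (D : dataset) (C : context) (s : state) : state :=
  let: (CM, Vis) := s in
  ((CM :\ C) :|: [set C' | connected C C' && (C' \in COE D V) && (C' \notin C |: Vis)],
   C |: Vis).

(* One iteration of the while loop, as a Markov kernel on states. *)
Definition step (D : dataset) (s : state) (s' : state) : R :=
  let: (CM, Vis) := s in
  if (#|Vis| <= n)%N && (CM != set0) then
    \sum_(C in CM) exp_mech D CM C * (s' == next_state D C s)%:R
  else (s' == s)%:R.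

(* Distribution of the state after k iterations (the loop body is the identity
   once the loop condition fails; the loop runs at most n+1 times since
   |Visited| grows by one at every iteration). *)
Fixpoint run (D : dataset) (CV : context) (k : nat) (s : state) : R :=
  match k with
  | 0 => (s == (([set CV] : {set context}), (set0 : {set context})))%:R
  | k'.+1 => \sum_(s0 : state) run D CV k' s0 * step D s0 s
  end.

Definition bfs_sampling (D : dataset) (CV : context) (C : context) : R :=
  \sum_(s : state) run D CV n.+1 s * exp_mech D s.2 C.

End COE.

(* Main.v *)
Require Import Defs.
From HB Require Import structures.
From mathcomp Require Import all_boot all_order all_algebra.
From mathcomp Require Import reals.
From mathcomp Require Import sequences exp.
From mathcomp Require Import ring lra.
Import Order.TTheory GRing.Theory Num.Theory.
Local Open Scope ring_scope.

Section Helpers.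
Variables (R : realType) (m : nat) (dom : 'I_m -> nat).
Variables (f : dataset R dom -> record R dom -> bool)
  (g : dataset R dom -> context dom -> R) (Delta eps : R) (n : nat)
  (V : record R dom).

Lemma weight_ge0 D C : 0 <= weight f g Delta eps V D C.
Proof. rewrite /weight; case: ifP => _ //; exact/ltW/expR_gt0. Qed.

Lemma sumw_ge0 D (S : {set context dom}) : 0 <= \sum_(C in S) weight f g Delta eps V D C.
Proof. by apply: sumr_ge0 => C _; apply: weight_ge0. Qed.

Lemma exp_mech_ge0 D S C : 0 <= exp_mech f g Delta eps V D S C.
Proof.
rewrite /exp_mech; case: ifP => _ //.
by apply: divr_ge0; [apply: weight_ge0 | apply: sumw_ge0].
Qed.

Lemma weight_le (heps : 0 < eps) (hD : 0 < Delta) D1 D2 C :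
  COE f D1 V = COE f D2 V -> `|g D1 C - g D2 C| <= Delta ->
  weight f g Delta eps V D1 C <= expR (eps / 2) * weight f g Delta eps V D2 C.
Proof.
move=> hC hg; rewrite /weight hC; case: ifP => _; last by rewrite mulr0.
rewrite -expRD ler_expR.
have h1 : g D1 C - g D2 C <= Delta by apply: le_trans (ler_norm _) hg.
have -> : eps * g D1 C / (2 * Delta) =
  eps * (g D1 C - g D2 C) / (2 * Delta) + eps * g D2 C / (2 * Delta).
  by rewrite mulrBr mulrBl subrK.
rewrite lerD2r.
have -> : eps / 2 = eps * Delta / (2 * Delta).
  by rewrite invfM mulrA -[eps * Delta / 2]mulrA [Delta / 2]mulrC mulrA mulfK ?gt_eqF.
apply: ler_wpM2r; first by rewrite invr_ge0; lra.
by apply: ler_wpM2l; [lra|].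
Qed.

Lemma ratio_le (a A b B E : R) : 0 <= a -> a <= A -> 0 <= b -> b <= B ->
  0 < E -> a <= E * b -> B <= E * A -> a / A <= E * E * (b / B).
Proof.
move=> a0 aA b0 bB E0 ab BA.
have [->|ap] := eqVneq a 0.
  by rewrite mul0r; apply: mulr_ge0; [apply: mulr_ge0; lra| apply: divr_ge0; lra].
have apos : 0 < a by rewrite lt_def ap a0.
have Ap : 0 < A by lra.
have bp : 0 < b.
  rewrite lt_def b0 andbT; apply/eqP => b0'; move: ab; rewrite b0' mulr0; lra.
have Bp : 0 < B by lra.
rewrite ler_pdivrMr //.
have -> : E * E * (b / B) * A = (E * E * b * A) / B by rewrite mulrA mulrAC.
rewrite ler_pdivlMr //.
have h1 : a * B <= a * (E * A) by apply: ler_wpM2l; lra.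
have h2 : a * (E * A) <= (E * b) * (E * A) by apply: ler_wpM2r; [apply: mulr_ge0; lra|].
apply: le_trans h1 (le_trans h2 _); rewrite le_eqVlt; apply/orP; left; apply/eqP; ring.
Qed.

Lemma exp_mech_le (heps : 0 < eps) (hD : 0 < Delta) D1 D2 S C :
  COE f D1 V = COE f D2 V -> (forall C, `|g D1 C - g D2 C| <= Delta) ->
  exp_mech f g Delta eps V D1 S C <= expR eps * exp_mech f g Delta eps V D2 S C.
Proof.
move=> hC hg; rewrite /exp_mech; case: ifP => CS; last by rewrite mulr0.
have -> : expR eps = expR (eps/2) * expR (eps/2) by rewrite -expRD; congr expR; field.
apply: ratio_le.
- exact: weight_ge0.
- by rewrite (bigD1 C) //= lerDl; apply: sumr_ge0 => *; apply: weight_ge0.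
- exact: weight_ge0.
- by rewrite (bigD1 C) //= lerDl; apply: sumr_ge0 => *; apply: weight_ge0.
- exact: expR_gt0.
- exact: weight_le.
- rewrite mulr_sumr; apply: ler_sum => C' _; apply: weight_le => //.
  by rewrite distrC.
Qed.


Lemma next_state_eq D1 D2 C s :
  COE f D1 V = COE f D2 V -> next_state f V D1 C s = next_state f V D2 C s.
Proof. by move=> hC; case: s => CM Vis; rewrite /next_state hC. Qed.

Lemma step_ge0 D s s' : 0 <= step f g Delta eps V n D s s'.
Proof.
case: s => CM Vis; rewrite /step; case: ifP => _; last exact: ler0n.
apply: sumr_ge0 => C _; apply: mulr_ge0; [exact: exp_mech_ge0 | exact: ler0n].
Qed.

Lemma step_le (heps : 0 < eps) (hD : 0 < Delta) D1 D2 s s' :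
  COE f D1 V = COE f D2 V -> (forall C, `|g D1 C - g D2 C| <= Delta) ->
  step f g Delta eps V n D1 s s' <= expR eps * step f g Delta eps V n D2 s s'.
Proof.
move=> hC hg; case: s => CM Vis; rewrite /step; case: ifP => _.
  rewrite mulr_sumr; apply: ler_sum => C _.
  rewrite (next_state_eq _ _ _ _ hC) mulrA; apply: ler_wpM2r; first exact: ler0n.
  exact: exp_mech_le.
apply: ler_peMl; first exact: ler0n.
by rewrite -expR0 ler_expR ltW.
Qed.

Lemma run_ge0 D CV k s : 0 <= run f g Delta eps V n D CV k s.
Proof.
elim: k s => [|k IH] s /=; first exact: ler0n.
by apply: sumr_ge0 => s0 _; apply: mulr_ge0; [apply: IH | apply: step_ge0].
Qed.

Lemma run_le (heps : 0 < eps) (hD : 0 < Delta) D1 D2 CV k s :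
  COE f D1 V = COE f D2 V -> (forall C, `|g D1 C - g D2 C| <= Delta) ->
  run f g Delta eps V n D1 CV k s <= expR (k%:R * eps) * run f g Delta eps V n D2 CV k s.
Proof.
move=> hC hg; elim: k s => [|k IH] s /=; first by rewrite mul0r expR0 mul1r.
rewrite mulr_sumr; apply: ler_sum => s0 _.
have -> : expR (k.+1%:R * eps) = expR (k%:R * eps) * expR eps.
  by rewrite -expRD -nat1r mulrDl mul1r addrC.
rewrite mulrACA; apply: ler_pM.
- exact: run_ge0.
- exact: step_ge0.
- exact: IH.
- exact: step_le.
Qed.

Lemma bfs_le (heps : 0 < eps) (hD : 0 < Delta) D1 D2 CV C :
  COE f D1 V = COE f D2 V -> (forall C, `|g D1 C - g D2 C| <= Delta) ->
  bfs_sampling f g Delta eps V n D1 CV C <=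
  expR ((n.+2)%:R * eps) * bfs_sampling f g Delta eps V n D2 CV C.
Proof.
move=> hC hg; rewrite /bfs_sampling mulr_sumr; apply: ler_sum => s _.
have -> : expR ((n.+2)%:R * eps) = expR ((n.+1)%:R * eps) * expR eps.
  by rewrite -expRD -[(n.+2)%:R]nat1r mulrDl mul1r addrC.
rewrite mulrACA; apply: ler_pM.
- exact: run_ge0.
- exact: exp_mech_ge0.
- exact: run_le.
- exact: exp_mech_le.
Qed.

Lemma bfs_ge0 D CV C : 0 <= bfs_sampling f g Delta eps V n D CV C.
Proof.
by apply: sumr_ge0 => s _; apply: mulr_ge0; [apply: run_ge0 | apply: exp_mech_ge0].
Qed.

End Helpers.

Theorem theorem10 (R : realType) (m : nat) (dom : 'I_m -> nat)
  (f : dataset R dom -> record R dom -> bool)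
  (g : dataset R dom -> context dom -> R) (Delta eps1 : R) (n : nat)
  (V : record R dom) (CV : context dom) :
  0 < eps1 -> (1 <= n)%N ->
  0 < Delta -> Delta <= 1 ->
  (forall D1 D2 : dataset R dom, neighbors D1 D2 ->
     forall C : context dom, `|g D1 C - g D2 C| <= Delta) ->
  forall D1 D2 : dataset R dom,
    neighbors D1 D2 ->
    COE f D1 V = COE f D2 V -> COE f D1 V != set0 ->
    CV \in COE f D1 V ->
    forall S : {set context dom},
      \sum_(C in S) bfs_sampling f g Delta eps1 V n D1 CV C
        <= expR ((2 * n.+1)%:R * eps1) *
           \sum_(C in S) bfs_sampling f g Delta eps1 V n D2 CV C.
Proof.
move=> heps hn hD hD1 hsens D1 D2 hN hC _ _ S.
rewrite mulr_sumr; apply: ler_sum => C _.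
have H := @bfs_le R m dom f g Delta eps1 n V heps hD D1 D2 CV C hC (hsens _ _ hN).
apply: le_trans H _.
apply: ler_wpM2r; first exact: bfs_ge0.
rewrite ler_expR ler_wpM2r ?(ltW heps) // ler_nat.
by rewrite mul2n -addnn addSn addnS !ltnS leq_addl.
Qed.
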